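(* Let $\phi$ be a cocycle with respect to $\theta$ on $\mathbb{R}^+\times\Sigma\times X$ having a nested bounded pullback absorbing set $\{B_\sigma\}_{\sigma\in\Sigma}$. Assume that for every $\varepsilon>0$ and every $\sigma\in\Sigma$ there exist $T=T(B_\sigma,\varepsilon)\ge0$ and a function $\psi_{T,\sigma}\in\mathrm{Contr}(B_\sigma)$ such that $$\|\phi(T,\theta_{-T}(\sigma);x)-\phi(T,\theta_{-T}(\sigma);y)\|\le\varepsilon+\psi_{T,\sigma}(x,y)\quad\text{for all }x,y\in B_\sigma.$$ Then $\phi$ is pullback asymptotically compact.
   Context: Let $X$ be a Banach space with norm $\|\cdot\|$. Let $\Sigma$ be a set and $\theta=\{\theta_t\}_{t\in\mathbb{R}}$ a group of bijections $\theta_t:\Sigma\to\Sigma$ with $\theta_0=\mathrm{id}$ and $\theta_{t+\tau}=\theta_t\circ\theta_\tau$. A cocycle with respect to $\theta$ is a map $\phi:\mathbb{R}^+\times\Sigma\times X\to X$ with $\phi(0,\sigma;x)=x$ and $\phi(s+t,\sigma;x)=\phi(s,\theta_t(\sigma);\phi(t,\sigma;x))$ for all $s,t\ge 0$. For $B\subset X$, $\phi(t,\sigma;B)=\{\phi(t,\sigma;x):x\in B\}$. A bounded pullback absorbing set is a family $\{B_\sigma\}_{\sigma\in\Sigma}$ of bounded subsets of $X$ such that for every $\sigma$ and bounded $B\subset X$ there is $T\ge0$ with $\phi(t,\theta_{-t}(\sigma);B)\subset B_\sigma$ for all $t\ge T$; it is nested if moreover $B_{\theta_{-t}(\sigma)}\subset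 B_\sigma$ for all $t\ge0$, $\sigma\in\Sigma$. For a bounded set $B\subset X$, $\mathrm{Contr}(B)$ denotes the set of functions $\psi:X\times X\to\mathbb{R}$ such that every sequence $\{x_n\}\subset B$ has a subsequence $\{x_{n_k}\}$ with $\lim_{k\to\infty}\lim_{l\to\infty}\psi(x_{n_k},x_{n_l})=0$. $\phi$ is pullback asymptotically compact if for each $\sigma\in\Sigma$, every bounded sequence $\{x_n\}\subset X$ and every $\{t_n\}\subset\mathbb{R}^+$ with $t_n\to+\infty$, the sequence $\{\phi(t_n,\theta_{-t_n}(\sigma);x_n)\}$ is precompact in $X$. *)

(* Defs.v *)
From HB Require Import structures.
From mathcomp Require Import all_boot all_order all_algebra.
From mathcomp Require Import all_classical all_reals all_analysis.
Set Implicit Arguments. Unset Strict Implicit. Unset Printing Implicit Defensive.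
Import Order.TTheory GRing.Theory Num.Theory.
Import numFieldNormedType.Exports.
Local Open Scope classical_set_scope.
Local Open Scope ring_scope.

Section Defs.
Variables (R : realType) (X : completeNormedModType R) (Sigma : Type).

Definition is_group_flow (theta : R -> Sigma -> Sigma) : Prop :=
  (forall t, bijective (theta t)) /\
  theta 0 = id /\
  (forall t tau, theta (t + tau) = theta t \o theta tau).

(* cocycle phi : R^+ x Sigma x X -> X (only values at t >= 0 matter) *)
Definition is_cocycle (theta : R -> Sigma -> Sigma) (phi : R -> Sigma -> X -> X)
  : Prop :=
  (forall sigma x, phi 0 sigma x = x) /\
  (forall s t sigma x, 0 <= s -> 0 <= t ->
     phi (s + t) sigma x = phi s (theta t sigma) (phi t sigma x)).

Definition pullback_absorbing (theta : R -> Sigma -> Sigma)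
  (phi : R -> Sigma -> X -> X) (B : Sigma -> set X) : Prop :=
  (forall sigma, bounded_set (B sigma)) /\
  (forall sigma (D : set X), bounded_set D ->
     exists T, 0 <= T /\ forall t, T <= t ->
       phi t (theta (- t) sigma) @` D `<=` B sigma).

Definition nested (theta : R -> Sigma -> Sigma) (B : Sigma -> set X) : Prop :=
  forall sigma t, 0 <= t -> B (theta (- t) sigma) `<=` B sigma.

Definition Contr (B : set X) (psi : X -> X -> R) : Prop :=
  forall x : nat -> X, (forall n, B (x n)) ->
    exists (s : nat -> nat) (L : nat -> R),
      {homo s : m n / (m < n)%N >-> (m < n)%N} /\
      (forall k, (fun l => psi (x (s k)) (x (s l))) @ \oo --> L k) /\
      L @ \oo --> (0 : R).

(* precompact sequence: its set of values has compact closure *)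
Definition pullback_asymptotically_compact (theta : R -> Sigma -> Sigma)
  (phi : R -> Sigma -> X -> X) : Prop :=
  forall sigma (x : nat -> X) (t : nat -> R),
    bounded_set (range x) -> (forall n, 0 <= t n) -> t @ \oo --> +oo ->
    compact (closure (range (fun n => phi (t n) (theta (- t n) sigma) (x n)))).

End Defs.

(* Main.v *)
Require Import Defs.
From HB Require Import structures.
From mathcomp Require Import all_boot all_order all_algebra.
From mathcomp Require Import all_classical all_reals all_analysis.
From mathcomp Require Import ring lra.
Import Order.TTheory GRing.Theory Num.Theory.
Import numFieldNormedType.Exports.
Local Open Scope classical_set_scope.
Local Open Scope ring_scope.

Section Aux.
Variables (R : realType) (X : completeNormedModType R).

Definition covers (A : set X) (s : seq X) (e : R) :=
  A `<=` [set x | exists2 c, c \in s & ball c e x].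

Lemma ultra_cover (F : set_system X) (FU : UltraFilter F) (s : seq X)
  (P : X -> set X) :
  F [set x | exists2 c, c \in s & P c x] -> exists2 c, c \in s & F (P c).
Proof.
elim: s => [|a s IH] H.
  have PF : ProperFilter F := @ultra_proper _ F FU.
  have F0 : F set0 by apply: filterS H => x [c].
  by have := @filter_not_empty _ F PF F0.
case: (in_ultra_setVsetC (P a) FU) => Ha.
  by exists a => //; rewrite mem_head.
have : F [set x | exists2 c, c \in s & P c x].
  apply: filterS (filterI H Ha) => x [[c]].
  rewrite in_cons => /orP[/eqP-> Pc Hna|cs Pc _]; [exfalso; exact: Hna Pc|].
  by exists c.
by case/IH => c cs Fc; exists c => //; rewrite in_cons cs orbT.
Qed.

Lemma tb_compact (A : set X) :
  (forall e : R, 0 < e -> exists s, covers A s e) -> compact (closure A).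
Proof.
move=> tb; rewrite compact_ultra => F FU FA.
have PF : ProperFilter F := @ultra_proper _ F FU.
have cauF : cauchy F.
  apply: cauchy_exP => e e0.
  have e20 : 0 < e / 2 by rewrite divr_gt0.
  have [s cov] := tb _ e20.
  have : F [set x | exists2 c, c \in s & ball c e x].
    apply: filterS FA => p clp.
    have [a [Aa pa]] := clp (ball p (e/2)) (nbhsx_ballx p _ e20).
    have [c cs ca] := cov a Aa.
    exists c => //.
    have := ball_triangle ca (ball_sym pa).
    by rewrite -splitr.
  by case/(@ultra_cover F FU) => c _ Fc; exists c.
have cF : cvg F by exact: cauchy_cvg.
exists (lim F); split => //.
exact: (@closed_cvg _ _ F PF id _ (@closed_closure _ A) FA).
Qed.

End Aux.
Theorem theorem4p2 (R : realType) (X : completeNormedModType R) (Sigma : Type)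
  (theta : R -> Sigma -> Sigma) (phi : R -> Sigma -> X -> X)
  (B : Sigma -> set X) :
  is_group_flow theta ->
  is_cocycle theta phi ->
  pullback_absorbing theta phi B ->
  nested theta B ->
  (forall eps : R, 0 < eps -> forall sigma : Sigma,
     exists T : R, 0 <= T /\ exists psi : X -> X -> R,
       Contr (B sigma) psi /\
       forall x y, B sigma x -> B sigma y ->
         `|phi T (theta (- T) sigma) x - phi T (theta (- T) sigma) y|
           <= eps + psi x y) ->
  pullback_asymptotically_compact theta phi.
Proof.
move=> [_ [th0 thadd]] [ph0 phadd] [Bbd Babs] Bnest H.
move=> sigma x t xbd t0 tinf.
set y := fun n => phi (t n) (theta (- t n) sigma) (x n).
apply: tb_compact => e e0.
apply: contrapT => ncov.
have e4 : 0 < e / 4 by rewrite divr_gt0.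
have [T [T0 [psi [cpsi Hpsi]]]] := H (e/4) e4 sigma.
have [T1 [T10 absT1]] := Babs (theta (- T) sigma) (range x) xbd.
have [N _ HN] : exists2 N, True & forall n, (N <= n)%N -> T1 + T <= t n.
  have := cvgry_ge tinf (T1 + T).
  by case=> N _ HN; exists N.
set z := fun n => phi (t n - T) (theta (- t n) sigma) (x n).
have yz : forall n, (N <= n)%N ->
    y n = phi T (theta (- T) sigma) (z n) /\ B sigma (z n).
  move=> n Nn; have tn := HN n Nn.
  have tT : T1 <= t n - T by rewrite lerBrDr.
  have tT0 : 0 <= t n - T by exact: le_trans tT.
  split.
    rewrite /y /z -{1}(subrK T (t n)) addrC phadd //.
    congr phi.
    have := congr1 (fun f => f sigma) (thadd (t n - T) (- t n)).
    rewrite /= => <-.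
    by congr theta; ring.
  rewrite /z; have -> : theta (- t n) sigma = theta (- (t n - T)) (theta (- T) sigma).
    have := congr1 (fun f => f sigma) (thadd (- (t n - T)) (- T)).
    rewrite /= => <-.
    by congr theta; ring.
  apply: (Bnest sigma T T0).
  apply: (absT1 (t n - T) tT).
  by exists (x n) => //; exists n.
have gex : forall s : seq X, exists j, (N <= j)%N /\
    ~ (exists2 c, c \in s & ball c e (y j)).
  move=> s; apply: contrapT => Hs; apply: ncov.
  exists (s ++ map y (iota 0 N)) => p [j _ <-].
  case: (leqP N j) => Nj.
    apply: contrapT => nb; apply: Hs; exists j; split => // -[c cs bc].
    by apply: nb; exists c => //; rewrite mem_cat cs.
  exists (y j); last exact: ballxx.
  by rewrite mem_cat; apply/orP; right; apply: map_f; rewrite mem_iota.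
have [g Hg] := choice gex.
pose L := fix L n := if n is n'.+1 then y (g (L n')) :: L n' else [::].
pose idx n := g (L n).
have Lin : forall m n, (m < n)%N -> y (idx m) \in L n.
  move=> m; elim=> [//|n IH]; rewrite ltnS leq_eqVlt => /orP[/eqP->|mn].
    by rewrite /= mem_head.
  by rewrite /= in_cons IH // orbT.
have sep : forall m n, (m < n)%N -> ~ ball (y (idx m)) e (y (idx n)).
  move=> m n mn bl; apply: (Hg (L n)).2; exists (y (idx m)) => //.
  exact: Lin.
have Bw : forall k, B sigma (z (idx k)) by move=> k; exact: (yz _ (Hg _).1).2.
have [sq [Lk [shom [Lcv L0]]]] := cpsi (fun k => z (idx k)) Bw.
have [k0 _ Hk0] := cvgr_dist_lt _ _ L0 _ e4.
have Hk := Hk0 k0 (leqnn k0).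
have [l0 _ Hl0] := cvgr_dist_lt _ _ (Lcv k0) _ e4.
pose l := maxn l0 k0.+1.
have Hl := Hl0 l (leq_maxl _ _).
have kl : (sq k0 < sq l)%N by apply: shom; exact: leq_maxr.
apply: (sep _ _ kl); rewrite -ball_normE /=.
have [yk _] := yz _ (Hg (L (sq k0))).1.
have [yl _] := yz _ (Hg (L (sq l))).1.
rewrite /idx yk yl.
apply: le_lt_trans (Hpsi _ _ (Bw _) (Bw _)) _.
move: Hk Hl; rewrite sub0r normrN.
set P := psi _ _; set a := Lk k0 => Ha Hb.
have h1 : a <= `|a| := ler_norm a.
have h2 : P - a <= `|a - P| by rewrite distrC ler_norm.
lra.
Qed.
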